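(* Let $n\ge 1$, $d=2^n$, and let $\Lambda$ be a CPTP Pauli channel on $n$ qubits, with Pauli fidelities $f_a$ (indexed by the $d^2$ Pauli operators $a$), so that $\Lambda$ as a superoperator is diagonal in the Pauli basis with eigenvalues $f_a$. Let $F_p=\operatorname{Tr}(\Lambda)/d^2=\frac{1}{d^2}\sum_a f_a$ be its process fidelity, assume $\tfrac12<F_p<1$, and let $\gamma=\det(\Lambda)^{-2/d^2}$. Then $$F_p-1+2\lambda_0(1-F_p)+(2F_p-1)^{\lambda_0}\;\le\;\gamma^{-1/2}\;\le\;F_p,$$ where $$\lambda_0=\frac{\log(2-2F_p)-\log\bigl(-\log(2F_p-1)\bigr)}{\log(2F_p-1)}.$$ *)

(* Defs.v *)
From HB Require Import structures.
From mathcomp Require Import all_boot all_order all_algebra.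
From mathcomp Require Import all_classical all_reals all_analysis.
Set Implicit Arguments. Unset Strict Implicit. Unset Printing Implicit Defensive.
Import Order.TTheory GRing.Theory Num.Theory.
Local Open Scope ring_scope.

(* An n-qubit Pauli operator (up to phase) P_a, a = (x_i, z_i)_{i<n}:
   on qubit i it is I=(0,0), X=(1,0), Z=(0,1), Y=(1,1). There are d^2 = 4^n of them. *)
Definition pauli (n : nat) := {ffun 'I_n -> bool * bool}.

(* Symplectic form: P_a and P_b anticommute iff this is true. *)
Definition anticommute (n : nat) (a b : pauli n) : bool :=
  odd (\sum_(i < n) (((a i).1 && (b i).2) + ((a i).2 && (b i).1)))%N.

(* A CPTP Pauli channel Lambda(rho) = sum_b p_b P_b rho P_b^dagger is given by
   its Pauli error probabilities p (nonnegative, summing to 1). As a superoperator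
   it is diagonal in the Pauli basis: Lambda(P_a) = f_a P_a, with Pauli fidelity
   f_a = sum_b p_b (-1)^{<a,b>}. *)
Definition pauli_fidelity (R : ringType) (n : nat) (p : pauli n -> R) (a : pauli n) : R :=
  \sum_(b : pauli n) p b * (-1) ^+ (anticommute a b).

(* Trace and determinant of the (Pauli-diagonal) superoperator. *)
Definition chan_trace (R : ringType) (n : nat) (p : pauli n -> R) : R :=
  \sum_(a : pauli n) pauli_fidelity p a.
Definition chan_det (R : comRingType) (n : nat) (p : pauli n -> R) : R :=
  \prod_(a : pauli n) pauli_fidelity p a.

(* Main.v *)
Require Import Defs.
From HB Require Import structures.
From mathcomp Require Import all_boot all_order all_algebra.
From mathcomp Require Import all_classical all_reals all_analysis.
From mathcomp Require Import ring lra.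
Import Order.TTheory GRing.Theory Num.Theory.
Set Implicit Arguments. Unset Strict Implicit.
Local Open Scope ring_scope.

Lemma chord_ln (R : realType) (q f : R) : 0 < q -> q < 1 -> q <= f -> f <= 1 ->
  ln q * ((1 - f) / (1 - q)) <= ln f.
Proof.
move=> q0 q1 qf f1.
have d0 : 0 < 1 - q by rewrite subr_gt0.
have t0 : 0 <= (1 - f) / (1 - q) by rewrite divr_ge0 //; lra.
have t1 : (1 - f) / (1 - q) <= 1.
  rewrite ler_pdivrMr // mul1r; lra.
have := @concave_ln R (Itv01 t0 t1) q 1 q0 ltr01.
rewrite !convRE /= ln1 mulr0 addr0.
have -> : (1 - f) / (1 - q) * q + (1 - (1 - f) / (1 - q)) * 1 = f.
  by rewrite mulr1; field; rewrite gt_eqF.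
by rewrite mulrC.
Qed.

Lemma tangent_ln (R : realType) (F f : R) : 0 < F -> 0 < f ->
  ln f <= ln F + (f - F) / F.
Proof.
move=> F0 f0.
have h : ln (f / F) <= f / F - 1.
  rewrite -ler_expR lnK ?posrE ?divr_gt0 //.
  by have := expR_ge1Dx (f / F - 1); rewrite addrC subrK.
rewrite ln_div ?posrE // in h.
have -> : (f - F) / F = f / F - 1 by field; rewrite gt_eqF.
by rewrite -lerBlDl.
Qed.
Definition pb0 (n : nat) : pauli n := [ffun _ => (false, false)].

Lemma anticomm0 n (a : pauli n) : anticommute a (pb0 n) = false.
Proof.
rewrite /anticommute big1 // => i _; rewrite ffunE /=.
by rewrite !andbF.
Qed.

Definition flip n (i : 'I_n) (b a : pauli n) : pauli n :=
  [ffun j => if j == i then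
      (if (b i).2 then (~~ (a i).1, (a i).2) else ((a i).1, ~~ (a i).2))
    else a j].

Lemma flipK n (i : 'I_n) b : involutive (flip i b).
Proof.
move=> a; apply/ffunP => j; rewrite /flip !ffunE.
case: eqP => [->|//]; rewrite ?ffunE eqxx /=.
case: (b i).2 => /=; case: (a i) => u v /=; by rewrite ?negbK.
Qed.

Lemma anticomm_flip n (i : 'I_n) (b a : pauli n) : b i != (false, false) ->
  anticommute (flip i b a) b = ~~ anticommute a b.
Proof.
move=> hb; rewrite /anticommute (bigD1 i) //= [in RHS](bigD1 i) //=.
rewrite (eq_bigr (fun j => ((a j).1 && (b j).2) + ((a j).2 && (b j).1))%N); last first.
  by move=> j /negbTE hj; rewrite ffunE hj.
rewrite !oddD ffunE eqxx.
move: hb; case: (b i) => x y; case: (a i) => u v /=.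
by case: x; case: y; case: u; case: v => /=; rewrite ?negbK.
Qed.

Lemma sign_sum (R : realType) n (b : pauli n) : b != pb0 n ->
  \sum_(a : pauli n) (-1) ^+ (anticommute a b) = 0 :> R.
Proof.
move=> hb.
have [i hi] : exists i, b i != (false, false).
  apply/existsP; apply: contraR hb => /existsPn h; apply/eqP/ffunP => j.
  by rewrite ffunE; apply/eqP; rewrite -[_ == _]negbK h.
set S := \sum_a _.
have : S = - S.
  rewrite {1}/S (reindex_inj (can_inj (flipK i b))) /= /S -sumrN.
  by apply: eq_bigr => a _; rewrite anticomm_flip //; case: anticommute; rewrite /= ?expr0 ?expr1 ?opprK.
lra.
Qed.

Lemma card_pauli n : #|pauli n| = ((2 ^ n) ^ 2)%N.
Proof.
rewrite card_ffun card_prod card_bool card_ord.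
by rewrite -expnM mulnC expnM.
Qed.

Lemma trace_eq (R : realType) n (p : pauli n -> R) :
  chan_trace p = #|pauli n|%:R * p (pb0 n).
Proof.
rewrite /chan_trace /pauli_fidelity exchange_big /=.
rewrite (eq_bigr (fun b => p b * \sum_(a : pauli n) (-1) ^+ anticommute a b)); last first.
  by move=> b _; rewrite mulr_sumr.
rewrite (bigD1 (pb0 n)) //= [X in _ + X]big1 ?addr0; last first.
  by move=> b hb; rewrite (sign_sum R hb) mulr0.
rewrite (eq_bigr (fun _ => 1)); last by move=> a _; rewrite anticomm0.
by rewrite sumr_const mulrC.
Qed.

Lemma fid_bounds (R : realType) n (p : pauli n -> R) (hp0 : forall b, 0 <= p b)
  (hp1 : \sum_(b : pauli n) p b = 1) (a : pauli n) :
  2 * p (pb0 n) - 1 <= pauli_fidelity p a <= 1.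
Proof.
have hs : forall b, - p b <= p b * (-1) ^+ anticommute a b <= p b.
  move=> b; have := hp0 b; case: anticommute => /=; rewrite ?expr0 ?expr1 ?mulr1 ?mulrN1; lra.
apply/andP; split; last first.
  rewrite -hp1; apply: ler_sum => b _; by have /andP[] := hs b.
rewrite /pauli_fidelity (bigD1 (pb0 n)) //= anticomm0 expr0 mulr1.
have h1 := hp1; rewrite (bigD1 (pb0 n)) //= in h1.
have : - \sum_(b | b != pb0 n) p b <= \sum_(b | b != pb0 n) p b * (-1) ^+ anticommute a b.
  rewrite -sumrN; apply: ler_sum => b _; by have /andP[] := hs b.
lra.
Qed.

Lemma ln_prod (R : realType) (I : finType) (f : I -> R) : (forall i, 0 < f i) ->
  0 < \prod_i f i /\ ln (\prod_i f i) = \sum_i ln (f i).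
Proof.
move=> hf; apply: (big_rec2 (fun x y => 0 < x /\ ln x = y)).
  by rewrite ln1.
move=> i x y _ [hx <-]; split; first by rewrite mulr_gt0.
by rewrite lnM ?posrE.
Qed.

Theorem theorem1 (R : realType) (n : nat) (hn : (1 <= n)%N)
  (p : pauli n -> R) (hp0 : forall b, 0 <= p b) (hp1 : \sum_(b : pauli n) p b = 1) :
  let d : R := (2 ^ n)%:R in
  let Fp : R := chan_trace p / d ^+ 2 in
  let gamma : R := chan_det p `^ (- (2 / d ^+ 2)) in
  let lam0 : R := (ln (2 - 2 * Fp) - ln (- ln (2 * Fp - 1))) / ln (2 * Fp - 1) in
  1 / 2 < Fp < 1 ->
  Fp - 1 + 2 * lam0 * (1 - Fp) + (2 * Fp - 1) `^ lam0 <= gamma `^ (- (1 / 2)) <= Fp.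
Proof.
move=> d Fp gamma lam0 hF.
set N : R := #|pauli n|%:R.
have hN : d ^+ 2 = N by rewrite /N card_pauli natrX.
have N0 : 0 < N by rewrite -hN exprn_gt0 // /d ltr0n expn_gt0.
have eF : Fp = p (pb0 n).
  rewrite /Fp trace_eq -/N -hN; field; by rewrite pnatr_eq0 expn_eq0.
rewrite /gamma /lam0; clear gamma lam0; rewrite eF in hF *.
set F := p (pb0 n) in hF eF *.
move: hF => /andP [hF1 hF2].
set f := pauli_fidelity p.
have hf a : 2 * F - 1 <= f a <= 1 by apply: fid_bounds.
have fpos a : 0 < f a by have := hf a; lra.
have [det0 lndet] := ln_prod fpos.
have sumf : \sum_a f a = N * F by rewrite -[LHS]/(chan_trace p) trace_eq.
set S := \sum_a ln (f a) in lndet.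
have eg : (chan_det p `^ (- (2 / d ^+ 2))) `^ (- (1 / 2)) = expR (S / N).
  rewrite -powRrM /powR gt_eqF // /chan_det -/f lndet -hN.
  congr expR; field; by rewrite pnatr_eq0 expn_eq0.
rewrite eg.
set q := 2 * F - 1.
have q0 : 0 < q by rewrite /q; lra.
have q1 : q < 1 by rewrite /q; lra.
have lq : ln q < 0 by apply: ln_lt0; rewrite q0 q1.
have up : S <= N * ln F.
  apply: (@le_trans _ _ (\sum_a (ln F + (f a - F) / F))).
    by apply: ler_sum => a _; apply: tangent_ln => //; lra.
  rewrite big_split /= sumr_const -mulr_suml sumrB sumf sumr_const -/N.
  rewrite -[ln F *+ _]mulr_natl -/N.
  have -> : (N * F - F *+ #|pauli n|) = 0 by rewrite -mulr_natl -/N mulrC subrr.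
  by rewrite mul0r addr0 mulrC.
have lo : N * (ln q / 2) <= S.
  apply: (@le_trans _ _ (\sum_a ln q * ((1 - f a) / (1 - q)))); last first.
    apply: ler_sum => a _; apply: chord_ln => //; by have := hf a; rewrite /q; lra.
  rewrite -mulr_sumr -mulr_suml sumrB sumf sumr_const -mulr_natl -/N mulr1.
  rewrite /q le_eqVlt; apply/orP; left; apply/eqP; field; lra.
apply/andP; split; last first.
  rewrite -[F in _ <= F]lnK ?posrE; last lra.
  by rewrite ler_expR ler_pdivrMr // mulrC.
set lam := (ln (2 - 2 * F) - ln (- ln q)) / ln q.
have E : q `^ lam = (2 - 2 * F) / (- ln q).
  rewrite /powR gt_eqF //.
  have -> : lam * ln q = ln (2 - 2 * F) - ln (- ln q) by rewrite /lam; field; rewrite lt_eqF.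
  by rewrite expRB !lnK ?posrE; lra.
have -> : F - 1 + 2 * lam * (1 - F) + q `^ lam = q `^ lam * (1 + (1/2 - lam) * ln q).
  rewrite E; field; rewrite lt_eqF //; lra.
apply: (@le_trans _ _ (expR (ln q / 2))); last first.
  by rewrite ler_expR ler_pdivlMr // mulrC.
have -> : ln q / 2 = lam * ln q + (1/2 - lam) * ln q by field.
rewrite expRD -(_ : q `^ lam = expR (lam * ln q)); last by rewrite /powR gt_eqF.
rewrite ler_pM2l ?powR_gt0 //; exact: expR_ge1Dx.
Qed.
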